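(* Let $m,n\ge3$. The cycles $C_m$ and $C_n$ are never strongly disjoint. Moreover, $C_m$ and $C_n$ are weakly disjoint if and only if $\gcd(m,n)=1$.
   Context: A weight function on finite $U$ is $\alpha:U\times U\to\mathbb{R}$, $\alpha\ge0$, symmetric, summing to $1$; degree $p(u)=\sum_{u'}\alpha(u,u')$; a graph is $(U,\alpha)$. $C_k$ ($k\ge3$) is the cycle on vertices $u_1,\dots,u_k$ with $\alpha(u_i,u_{i\pm1})=1/(2k)$ (indices mod $k$) and all other weights $0$. For graphs $(U,\alpha)$, $(V,\beta)$ with degrees $p,q$, a weight joining is a weight function $\gamma$ on $U\times V$ with degree $r(u,v)=\sum_{(u',v')}\gamma((u,v),(u',v'))$ such that $\sum_v r(u,v)=p(u)$, $\sum_u r(u,v)=q(v)$, $p(u)\sum_{\tilde v}\gamma((u,v),(u',\tilde v))=\alpha(u,u')r(u,v)$ and $q(v)\sum_{\tilde u}\gamma((u,v),(\tilde u,v'))=\beta(v,v')r(u,v)$ for all $u,u',v,v'$. The graphs are strongly disjoint if the only weight joining is $\alpha\otimes\beta$, $(\alpha\otimes\beta)((u,v),(u',v'))=\alpha(u,u')\beta(v,v')$; weakly disjoint if every weight joining has degree $r(u,v)=p(u)q(v)$. *)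

(* Defs.v *)
From HB Require Import structures.
From mathcomp Require Import all_boot all_order all_algebra.
From mathcomp Require Import reals.
Set Implicit Arguments. Unset Strict Implicit. Unset Printing Implicit Defensive.
Import Order.TTheory GRing.Theory Num.Theory.
Local Open Scope ring_scope.

Section WeightDefs.
Variable R : realType.

Definition weight_fun (U : finType) (a : U -> U -> R) : Prop :=
  [/\ forall x y, 0 <= a x y,
      forall x y, a x y = a y x &
      \sum_(x : U) \sum_(y : U) a x y = 1].

Definition wdeg (U : finType) (a : U -> U -> R) (u : U) : R :=
  \sum_(u' : U) a u u'.

Definition cycle_w (k : nat) (i j : 'I_k) : R :=
  if (j == ordS i) || (i == ordS j) then (2 * k)%:R^-1 else 0.

Definition weight_joining (U V : finType) (a : U -> U -> R) (b : V -> V -> R)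
    (g : (U * V)%type -> (U * V)%type -> R) : Prop :=
  [/\ weight_fun g,
      forall u, \sum_(v : V) wdeg g (u, v) = wdeg a u,
      forall v, \sum_(u : U) wdeg g (u, v) = wdeg b v,
      forall u u' v, wdeg a u * (\sum_(v' : V) g (u, v) (u', v'))
                     = a u u' * wdeg g (u, v) &
      forall u v v', wdeg b v * (\sum_(u' : U) g (u, v) (u', v'))
                     = b v v' * wdeg g (u, v)].

Definition wtensor (U V : finType) (a : U -> U -> R) (b : V -> V -> R)
    (x y : (U * V)%type) : R := a x.1 y.1 * b x.2 y.2.

Definition strongly_disjoint (U V : finType) (a : U -> U -> R) (b : V -> V -> R) : Prop :=
  forall g, weight_joining a b g -> forall x y, g x y = wtensor a b x y.

Definition weakly_disjoint (U V : finType) (a : U -> U -> R) (b : V -> V -> R) : Prop :=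
  forall g, weight_joining a b g ->
    forall u v, wdeg g (u, v) = wdeg a u * wdeg b v.

End WeightDefs.
Arguments cycle_w R k i j : clear implicits.

(* Main.v *)
Require Import Defs.
From HB Require Import structures.
From mathcomp Require Import all_boot all_order all_algebra.
From mathcomp Require Import reals.
From mathcomp Require Import ring lra zify.
Set Implicit Arguments. Unset Strict Implicit. Unset Printing Implicit Defensive.
Import Order.TTheory GRing.Theory Num.Theory.
Local Open Scope ring_scope.

Section Cyc.
Variable R : realType.

Lemma eqS_pred k (a b : 'I_k) : (a == ordS b) = (b == ord_pred a).
Proof. by apply/eqP/eqP => ->; rewrite ?ordSK ?ord_predK. Qed.

Lemma iterS_val k (i : 'I_k) t : val (iter t (@ordS k) i) = ((i + t) %% k)%N.
Proof.
elim: t => [|t IH] /=; first by rewrite addn0 modn_small.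
by rewrite IH -addn1 modnDml addn1 addnS.
Qed.

Lemma ordSS_neq k (Hk : (3 <= k)%N) (i : 'I_k) : ordS (ordS i) != i.
Proof.
apply/eqP => /(congr1 val); rewrite (iterS_val i 2) => /eqP.
move=> /eqP H.
have /eqP : ((i + 2) %% k = (i + 0) %% k)%N by rewrite H addn0 modn_small.
by rewrite eqn_modDl mod0n modn_small.
Qed.

Lemma ordS_neq_pred k (Hk : (3 <= k)%N) (i : 'I_k) : ordS i != ord_pred i.
Proof.
apply/eqP => /(congr1 (@ordS k)); rewrite ord_predK; apply/eqP; exact: ordSS_neq.
Qed.

Lemma pick_sum (T : finType) (F : T -> R) a :
  \sum_j F j * (j == a)%:R = F a.
Proof.
rewrite (bigD1 a) //= eqxx mulr1 big1 ?addr0 // => j /negbTE ->; by rewrite mulr0.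
Qed.

Lemma pick_sum1 (T : finType) a :
  \sum_(j : T) (j == a)%:R = 1 :> R.
Proof.
rewrite (bigD1 a) //= eqxx big1 ?addr0 // => j /negbTE -> //.
Qed.

Lemma sum2 (T : finType) (F : T -> R) a b : a != b ->
  (forall j, j != a -> j != b -> F j = 0) -> \sum_j F j = F a + F b.
Proof.
move=> ab H; rewrite (bigD1 a) //= (bigD1 b) /=; last by rewrite eq_sym.
by rewrite big1 ?addr0 // => j /andP[jb ja]; apply: H.
Qed.

Lemma cycle_wE k (Hk : (3 <= k)%N) (i j : 'I_k) :
  cycle_w R k i j = (2 * k)%:R^-1 * ((j == ordS i)%:R + (j == ord_pred i)%:R).
Proof.
rewrite /cycle_w [i == ordS j]eqS_pred.
have := ordS_neq_pred Hk i.
case: (j =P ordS i) => [E1|_]; case: (j =P ord_pred i) => [E2|_] /=.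
- by rewrite -E1 -E2 eqxx.
- by rewrite addr0 mulr1.
- by rewrite add0r mulr1.
- by rewrite addr0 mulr0.
Qed.

Lemma wdeg_cycle k (Hk : (3 <= k)%N) (i : 'I_k) : wdeg (cycle_w R k) i = k%:R^-1.
Proof.
rewrite /wdeg (eq_bigr _ (fun j _ => cycle_wE Hk i j)) -mulr_sumr big_split /=.
rewrite !pick_sum1 natrM.
have k0 : k%:R != 0 :> R by rewrite pnatr_eq0 -lt0n (leq_trans _ Hk).
by field.
Qed.


Lemma shift_const k (f : 'I_k -> R) : (forall i, f (ordS i) = f i) ->
  forall i j, f i = f j.
Proof.
move=> H i j.
have Hit t (x : 'I_k) : f (iter t (@ordS k) x) = f x.
  by elim: t => //= t IH; rewrite H.
have -> : j = iter ((k - i) + j)%N (@ordS k) i.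
  apply: val_inj; rewrite iterS_val addnA subnKC ?(ltnW (ltn_ord i)) //.
  by rewrite modnDl modn_small.
by rewrite Hit.
Qed.

Lemma iterPS k t (x : 'I_k) : iter t (@ord_pred k) (iter t (@ordS k) x) = x.
Proof.
elim: t x => // t IH x; by rewrite [iter t.+1 (@ordS k) x]iterSr iterS IH ordSK.
Qed.

Lemma const2a m n (Hm : (0 < m)%N) (Hn : (0 < n)%N) (cop : coprime m n)
  (f : 'I_m -> 'I_n -> R) : (forall u v, f (ordS u) (ordS v) = f u v) ->
  forall u v, f u v = f (Ordinal Hm) (Ordinal Hn).
Proof.
move=> H u v.
have Hit t x y : f (iter t (@ordS m) x) (iter t (@ordS n) y) = f x y.
  by elim: t => //= t IH; rewrite H.
set t := chinese m n u v.
have -> : u = iter t (@ordS m) (Ordinal Hm).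
  by apply: val_inj; rewrite iterS_val /= add0n /t chinese_modl // modn_small.
have -> : v = iter t (@ordS n) (Ordinal Hn).
  by apply: val_inj; rewrite iterS_val /= add0n /t chinese_modr // modn_small.
by rewrite Hit.
Qed.

Lemma const2b m n (Hm : (0 < m)%N) (Hn : (0 < n)%N) (cop : coprime m n)
  (f : 'I_m -> 'I_n -> R) : (forall u v, f (ordS u) (ord_pred v) = f u v) ->
  forall u v, f u v = f (Ordinal Hm) (Ordinal Hn).
Proof.
move=> H u v.
have Hit t x y : f (iter t (@ordS m) x) (iter t (@ord_pred n) y) = f x y.
  by elim: t => //= t IH; rewrite H.
set t := chinese m n u (n - v).
have -> : u = iter t (@ordS m) (Ordinal Hm).
  by apply: val_inj; rewrite iterS_val /= add0n /t chinese_modl // modn_small.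
have -> : v = iter t (@ord_pred n) (Ordinal Hn).
  have -> : Ordinal Hn = iter t (@ordS n) v.
    apply: val_inj; rewrite iterS_val /= -modnDmr /t chinese_modr // modnDmr.
    by rewrite subnKC ?(ltnW (ltn_ord v)) // modnn.
  by rewrite iterPS.
by rewrite Hit.
Qed.


Lemma half_eq k (k0 : k%:R != 0 :> R) (X Y : R) :
  k%:R^-1 * X = (2 * k)%:R^-1 * Y -> 2 * X = Y.
Proof.
move=> H.
have -> : 2 * X = 2 * k%:R * (k%:R^-1 * X) by field.
by rewrite H natrM; field.
Qed.

Lemma natr_neq0 k : (0 < k)%N -> k%:R != 0 :> R.
Proof. by rewrite pnatr_eq0 -lt0n. Qed.

Lemma coprime_weak m n (Hm : (3 <= m)%N) (Hn : (3 <= n)%N) (cop : coprime m n) :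
  weakly_disjoint (cycle_w R m) (cycle_w R n).
Proof.
have Hm0 : (0 < m)%N by apply: leq_trans Hm.
have Hn0 : (0 < n)%N by apply: leq_trans Hn.
have m0 := natr_neq0 Hm0; have n0 := natr_neq0 Hn0.
move=> g [[g0 gs gt] J2 J3 J4 J5].
set r := wdeg g.
have suppU u v u' v' : u' != ordS u -> u' != ord_pred u -> g (u,v) (u',v') = 0.
  move=> h1 h2; have := J4 u u' v.
  rewrite (cycle_wE Hm) (negbTE h1) (negbTE h2) addr0 mulr0 mul0r wdeg_cycle //.
  move/eqP; rewrite mulf_eq0 invr_eq0 (negbTE m0) /= => /eqP S0.
  exact: (psumr_eq0P (fun j _ => g0 _ _) S0).
have suppV u v u' v' : v' != ordS v -> v' != ord_pred v -> g (u,v) (u',v') = 0.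
  move=> h1 h2; have := J5 u v v'.
  rewrite (cycle_wE Hn) (negbTE h1) (negbTE h2) addr0 mulr0 mul0r wdeg_cycle //.
  move/eqP; rewrite mulf_eq0 invr_eq0 (negbTE n0) /= => /eqP S0.
  exact: (psumr_eq0P (fun j _ => g0 _ _) S0).
have sumU u v u' : \sum_v' g (u,v) (u',v') =
    g (u,v) (u', ordS v) + g (u,v) (u', ord_pred v).
  by apply: sum2 (ordS_neq_pred Hn v) _ => j h1 h2; apply: suppV.
have sumV u v v' : \sum_u' g (u,v) (u',v') =
    g (u,v) (ordS u, v') + g (u,v) (ord_pred u, v').
  by apply: sum2 (ordS_neq_pred Hm u) _ => j h1 h2; apply: suppU.
have E1 u v : 2 * (g (u,v) (ordS u, ordS v) + g (u,v) (ordS u, ord_pred v)) = r (u,v).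
  apply: (half_eq m0); rewrite -sumU -(wdeg_cycle Hm u) J4 (cycle_wE Hm).
  by rewrite eqxx (negbTE (ordS_neq_pred Hm u)) addr0 mulr1.
have E2 u v : 2 * (g (u,v) (ord_pred u, ordS v) + g (u,v) (ord_pred u, ord_pred v)) = r (u,v).
  apply: (half_eq m0); rewrite -sumU -(wdeg_cycle Hm u) J4 (cycle_wE Hm).
  by rewrite eqxx eq_sym (negbTE (ordS_neq_pred Hm u)) add0r mulr1.
have E3 u v : 2 * (g (u,v) (ordS u, ordS v) + g (u,v) (ord_pred u, ordS v)) = r (u,v).
  apply: (half_eq n0); rewrite -sumV -(wdeg_cycle Hn v) J5 (cycle_wE Hn).
  by rewrite eqxx (negbTE (ordS_neq_pred Hn v)) addr0 mulr1.
have E4 u v : 2 * (g (u,v) (ordS u, ord_pred v) + g (u,v) (ord_pred u, ord_pred v)) = r (u,v).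
  apply: (half_eq n0); rewrite -sumV -(wdeg_cycle Hn v) J5 (cycle_wE Hn).
  by rewrite eqxx eq_sym (negbTE (ordS_neq_pred Hn v)) add0r mulr1.
have Ha u v : g (u,v) (ordS u, ordS v) = g (u,v) (ord_pred u, ord_pred v).
  by have := E1 u v; have := E4 u v; lra.
have Hb u v : g (u,v) (ordS u, ord_pred v) = g (u,v) (ord_pred u, ordS v).
  by have := E1 u v; have := E3 u v; lra.
pose a u v := g (u,v) (ordS u, ordS v).
pose b u v := g (u,v) (ordS u, ord_pred v).
have aS u v : a (ordS u) (ordS v) = a u v.
  by rewrite /a Ha !ordSK gs.
have bS u v : b (ordS u) (ord_pred v) = b u v.
  by rewrite /b Hb ordSK ord_predK gs.
have rK u v : r (u,v) = 2 * (a (Ordinal Hm0) (Ordinal Hn0) + b (Ordinal Hm0) (Ordinal Hn0)).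
  by rewrite -E1 -/(a u v) -/(b u v) (const2a Hm0 Hn0 cop aS) (const2b Hm0 Hn0 cop bS).
move=> u v.
have := J2 u; rewrite (eq_bigr _ (fun v _ => rK u v)) sumr_const card_ord.
rewrite !wdeg_cycle // rK => H.
rewrite -mulr_natr in H.
rewrite -H; field; done.
Qed.

End Cyc.

Section Constr.
Variable R : realType.
Variables (m n d : nat).
Hypotheses (Hm : (3 <= m)%N) (Hn : (3 <= n)%N) (dm : (d %| m)%N) (dn : (d %| n)%N).

Definition a0 (x : 'I_m * 'I_n) : R := ((x.1 %% d)%N == (x.2 %% d)%N)%:R.
Definition Zs : R := \sum_x a0 x.
Definition gam (x y : 'I_m * 'I_n) : R :=
  (2 * Zs)^-1 * (a0 x * ((y.1 == ordS x.1)%:R * (y.2 == ordS x.2)%:R)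
               + a0 y * ((x.1 == ordS y.1)%:R * (x.2 == ordS y.2)%:R)).

Lemma a0S u v : a0 (ordS u, ordS v) = a0 (u, v).
Proof.
rewrite /a0 /= (modn_dvdm _ dm) (modn_dvdm _ dn).
by rewrite -[u.+1]addn1 -[v.+1]addn1 eqn_modDr.
Qed.

Lemma a0P u v : a0 (ord_pred u, ord_pred v) = a0 (u, v).
Proof. by rewrite -a0S !ord_predK. Qed.

Lemma a0_ge0 x : 0 <= a0 x.
Proof. exact: ler0n. Qed.

Let Hm0 : (0 < m)%N. Proof. exact: leq_trans Hm. Qed.
Let Hn0 : (0 < n)%N. Proof. exact: leq_trans Hn. Qed.

Lemma Zs_gt0 : 0 < Zs.
Proof.
rewrite /Zs (bigD1 (Ordinal Hm0, Ordinal Hn0)) //= {1}/a0 /= eqxx.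
have : 0 <= \sum_(i | i != (Ordinal Hm0, Ordinal Hn0)) a0 i.
  by apply: sumr_ge0 => i _; exact: a0_ge0.
rewrite /= mulr1n; lra.
Qed.

Lemma Zs_neq0 : Zs != 0.
Proof. by rewrite gt_eqF // Zs_gt0. Qed.

Lemma sum_gam_v u v u' : \sum_v' gam (u,v) (u',v') =
  (2 * Zs)^-1 * a0 (u,v) * ((u' == ordS u)%:R + (u' == ord_pred u)%:R).
Proof.
rewrite /gam -mulr_sumr big_split /=.
have -> : \sum_v' a0 (u,v) * ((u' == ordS u)%:R * (v' == ordS v)%:R)
    = a0 (u,v) * (u' == ordS u)%:R.
  by under eq_bigr => v' _ do rewrite mulrA; rewrite pick_sum.
have -> : \sum_v' a0 (u',v') * ((u == ordS u')%:R * (v == ordS v')%:R)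
    = a0 (u,v) * (u' == ord_pred u)%:R.
  under eq_bigr => v' _ do rewrite mulrA (eqS_pred v).
  rewrite pick_sum eqS_pred.
  by case: eqP => [->|_]; rewrite ?a0P ?mulr0 ?mulr1.
by ring.
Qed.

Lemma sum_gam_u u v v' : \sum_u' gam (u,v) (u',v') =
  (2 * Zs)^-1 * a0 (u,v) * ((v' == ordS v)%:R + (v' == ord_pred v)%:R).
Proof.
rewrite /gam -mulr_sumr big_split /=.
have -> : \sum_u' a0 (u,v) * ((u' == ordS u)%:R * (v' == ordS v)%:R)
    = a0 (u,v) * (v' == ordS v)%:R.
  by under eq_bigr => u' _ do rewrite mulrA mulrAC; rewrite pick_sum.
have -> : \sum_u' a0 (u',v') * ((u == ordS u')%:R * (v == ordS v')%:R)
    = a0 (u,v) * (v' == ord_pred v)%:R.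
  under eq_bigr => u' _ do rewrite mulrA mulrAC (eqS_pred u).
  rewrite pick_sum eqS_pred.
  by case: eqP => [->|_]; rewrite ?a0P ?mulr0 ?mulr1.
by ring.
Qed.

Lemma wdeg_gam u v : wdeg gam (u,v) = 2 * (2 * Zs)^-1 * a0 (u,v).
Proof.
rewrite /wdeg.
have -> : \sum_y gam (u,v) y = \sum_u' \sum_v' gam (u,v) (u',v').
  by rewrite pair_bigA; apply: eq_bigr => -[].
under eq_bigr => u' _ do rewrite sum_gam_v.
rewrite -mulr_sumr big_split /= !pick_sum1.
ring.
Qed.

Lemma gam_joining : weight_joining (cycle_w R m) (cycle_w R n) gam.
Proof.
have m0 := natr_neq0 R Hm0; have n0 := natr_neq0 R Hn0.
have Z0 := Zs_neq0.
have Zge : 0 <= Zs by apply: ltW; exact: Zs_gt0.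
pose Tu u := \sum_v a0 (u,v).
pose Tv v := \sum_u a0 (u,v).
have TuS u : Tu (ordS u) = Tu u.
  by rewrite /Tu (reindex_inj (@ordS_inj n)) /=; apply: eq_bigr => v _; exact: a0S.
have TvS v : Tv (ordS v) = Tv v.
  by rewrite /Tv (reindex_inj (@ordS_inj m)) /=; apply: eq_bigr => u _; exact: a0S.
have ZTu u : Zs = Tu u *+ m.
  transitivity (\sum_u' Tu u').
    by rewrite /Zs /Tu pair_bigA; apply: eq_bigr => -[].
  by rewrite (eq_bigr _ (fun u' _ => shift_const TuS u' u)) sumr_const card_ord.
have ZTv v : Zs = Tv v *+ n.
  transitivity (\sum_v' Tv v').
    by rewrite /Zs /Tv exchange_big pair_bigA; apply: eq_bigr => -[].
  by rewrite (eq_bigr _ (fun v' _ => shift_const TvS v' v)) sumr_const card_ord.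
split.
- split.
  + move=> x y; rewrite /gam; apply: mulr_ge0.
      by rewrite invr_ge0 mulr_ge0.
    by apply: addr_ge0; apply: mulr_ge0; rewrite ?a0_ge0 // mulr_ge0.
  + by move=> x y; rewrite /gam addrC.
  + rewrite (eq_bigr (fun x => 2 * (2 * Zs)^-1 * a0 x)); last first.
      by move=> [u v] _; exact: wdeg_gam.
    by rewrite -mulr_sumr -/Zs; field.
- move=> u; rewrite (eq_bigr _ (fun v _ => wdeg_gam u v)) -mulr_sumr -/(Tu u).
  rewrite wdeg_cycle // (ZTu u) -mulr_natr; field.
  by rewrite m0 /=; apply: contra Z0 => /eqP T0; rewrite (ZTu u) T0 mul0rn.
- move=> v; rewrite (eq_bigr _ (fun u _ => wdeg_gam u v)) -mulr_sumr -/(Tv v).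
  rewrite wdeg_cycle // (ZTv v) -mulr_natr; field.
  by rewrite n0 /=; apply: contra Z0 => /eqP T0; rewrite (ZTv v) T0 mul0rn.
- move=> u u' v; rewrite wdeg_cycle // sum_gam_v (cycle_wE R Hm) wdeg_gam natrM.
  by field; rewrite Z0 m0.
- move=> u v v'; rewrite wdeg_cycle // sum_gam_u (cycle_wE R Hn) wdeg_gam natrM.
  by field; rewrite Z0 n0.
Qed.

Lemma gam_zero : gam (Ordinal Hm0, Ordinal Hn0)
  (ordS (Ordinal Hm0), ord_pred (Ordinal Hn0)) = 0.
Proof.
rewrite /gam /= eq_sym (negbTE (ordS_neq_pred Hn _)).
rewrite (eq_sym (Ordinal Hm0)) (negbTE (ordSS_neq Hm _)).
by rewrite !mul0r !mulr0 addr0 mulr0.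
Qed.

End Constr.

Theorem proposition3p7 (R : realType) (m n : nat) :
  (3 <= m)%N -> (3 <= n)%N ->
  ~ strongly_disjoint (cycle_w R m) (cycle_w R n) /\
  (weakly_disjoint (cycle_w R m) (cycle_w R n) <-> coprime m n).
Proof.
move=> Hm Hn.
have Hm0 : (0 < m)%N by apply: leq_trans Hm.
have Hn0 : (0 < n)%N by apply: leq_trans Hn.
have m0 := natr_neq0 R Hm0; have n0 := natr_neq0 R Hn0.
pose d := gcdn m n.
have dm : (d %| m)%N := dvdn_gcdl m n.
have dn : (d %| n)%N := dvdn_gcdr m n.
have J := gam_joining R Hm Hn dm dn.
split.
- move=> SD.
  have G := gam_zero R d Hm Hn.
  rewrite (SD _ J) /wtensor /cycle_w /= eqxx ord_predK eqxx orbT /= in G.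
  move/eqP: G; rewrite mulf_eq0 !invr_eq0 !natrM !mulf_eq0 (negbTE m0) (negbTE n0).
  by rewrite pnatr_eq0.
- split; last exact: coprime_weak.
  move=> WD; case: (boolP (coprime m n)) => // nc.
  have d0 : (0 < d)%N by rewrite gcdn_gt0 Hm0.
  have d1 : (1 < d)%N.
    by move: d0 nc; rewrite /coprime -/d; case: (d) => [|[|k]].
  have o1 : (1 < n)%N by apply: leq_trans Hn.
  have := WD _ J (Ordinal Hm0) (Ordinal o1).
  rewrite wdeg_gam // /a0 /= mod0n (modn_small d1) /= mulr0 !wdeg_cycle //.
  move/eqP; rewrite eq_sym mulf_eq0 !invr_eq0 (negbTE m0) (negbTE n0).
  by [].
Qed.
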